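(* Let $k$ be a field of characteristic $p>2$ ($p$ prime). For any $u,v,w\in k_1\langle X\rangle$, $$\kappa(u,vw)\equiv v^p\kappa(u,w)+w^p\kappa(u,v)\pmod{T^{(3)}}.$$ In particular, if $u,v\in k_0\langle X\rangle$ and $\alpha\in k$, then $\kappa(u,\alpha v)=\alpha^p\kappa(u,v)$.
   Context: $X=\{x_i\mid i\ge0\}$ is countably infinite; $k_1\langle X\rangle$ (resp. $k_0\langle X\rangle$) is the free unitary (resp. nonunitary) associative $k$-algebra on $X$. $[a,b]=ab-ba$, $[a,b,c]=[[a,b],c]$. $T^{(3)}$ is the $T$-ideal of $k_1\langle X\rangle$ (ideal invariant under all endomorphisms) generated by $[x_1,x_2,x_3]$. $\kappa(u,v)=[u,v]u^{p-1}v^{p-1}$. *)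

(* Defs.v *)
From HB Require Import structures.
From mathcomp Require Import all_boot all_order all_algebra.
From mathcomp.multinomials Require Import monalg.
Set Implicit Arguments. Unset Strict Implicit. Unset Printing Implicit Defensive.
Import GRing.Theory.
Local Open Scope ring_scope.

(* The free unitary associative k-algebra k_1<X> on X = {x_i | i >= 0}:
   k-linear combinations of (noncommutative) words over nat. *)
Definition freeAlg (k : fieldType) := {malg k[fmonom nat]}.

Definition xvar (k : fieldType) (i : nat) : freeAlg k := << fmu i >>.

(* k_0<X>: the nonunitary free algebra, i.e. the elements with zero
   constant term (coefficient of the empty word). *)
Definition in_k0 (k : fieldType) (f : freeAlg k) : Prop := f@_(fmone nat) = 0.

Definition comm (R : ringType) (a b : R) : R := a * b - b * a.
Definition comm3 (R : ringType) (a b c : R) : R := comm (comm a b) c.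

Definition kappa (R : ringType) (p : nat) (u v : R) : R :=
  comm u v * u ^+ p.-1 * v ^+ p.-1.

Definition is_ideal (R : ringType) (S : R -> Prop) : Prop :=
  [/\ S 0, (forall a b, S a -> S b -> S (a + b)), (forall a, S a -> S (- a)),
      (forall a b, S b -> S (a * b)) & (forall a b, S a -> S (a * b))].

Definition is_Tideal (k : fieldType) (S : freeAlg k -> Prop) : Prop :=
  is_ideal S /\
  forall (f : {lrmorphism freeAlg k -> freeAlg k}) a, S a -> S (f a).

Definition T3 (k : fieldType) (a : freeAlg k) : Prop :=
  forall S : freeAlg k -> Prop, is_Tideal S ->
    S (comm3 (xvar k 1) (xvar k 2) (xvar k 3)) -> S a.

(* Main.v *)
Require Import Defs.
From HB Require Import structures.
From mathcomp Require Import all_boot all_order all_algebra.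
From mathcomp.multinomials Require Import monalg.
From mathcomp Require Import finmap.
From Stdlib Require Import Setoid Morphisms.
Import GRing.Theory.
Local Open Scope ring_scope.

Set Implicit Arguments. Unset Strict Implicit.

Lemma malgC_comm (k : fieldType) (c : k) (x : freeAlg k) : GRing.comm c%:MP x.
Proof.
rewrite /GRing.comm mul_malgC; apply/malgP => m.
rewrite mcoeffZ (@mcoeffMrw _ _ (msupp x) _ x c%:MP m (fsubset_refl _) (msuppC_le c)).
rewrite big_seq_fset1 mcoeffC eqxx mulr1n.
under eq_bigr do rewrite mulm1.
case: (boolP (m \in msupp x)) => hm.
  rewrite (big_fsetD1 m) //= eqxx mulr1n big1_fset ?addr0 ?[c * _]mulrC //.
  by move=> i; rewrite in_fsetD1 => /andP[/negbTE -> _]. 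
rewrite big1_fset; first by rewrite (mcoeff_outdom hm) mulr0.
by move=> i hi _; case: eqP => [e|]; [rewrite e in hi; rewrite (negbTE hm) in hi|].
Qed.

Section Subst.
Variables (k : fieldType) (g : nat -> freeAlg k).

Definition hfun (m : fmonom nat) : freeAlg k := \prod_(i <- (m : seq nat)) g i.

Lemma hfun_mm : mmorphism hfun.
Proof.
split; last by rewrite /hfun fm1 big_nil.
by move=> m1 m2; rewrite /hfun fmM big_cat.
Qed.

HB.instance Definition _ := isMultiplicative.Build (fmonom nat) (freeAlg k) hfun hfun_mm.

Definition subst : freeAlg k -> freeAlg k := mmap (@malgC _ k) hfun.

Lemma subst_is_additive : additive subst.
Proof. exact: mmap_is_additive. Qed.
HB.instance Definition _ := GRing.isAdditive.Build (freeAlg k) (freeAlg k) subst subst_is_additive.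

Lemma subst_is_multiplicative : multiplicative subst.
Proof. apply: commr_mmap_is_multiplicative => c m m'; exact: malgC_comm. Qed.
HB.instance Definition _ := GRing.isMultiplicative.Build (freeAlg k) (freeAlg k) subst subst_is_multiplicative.

Lemma subst_is_scalable : scalable subst.
Proof. by move=> c x; rewrite /subst mmapZ /= mul_malgC. Qed.
HB.instance Definition _ := GRing.isScalable.Build k (freeAlg k) (freeAlg k) *:%R subst subst_is_scalable.

Lemma subst_x i : subst (xvar k i) = g i.
Proof. by rewrite /subst /xvar mmapU /= mpolyC1E mul1r /hfun fmU big_seq1. Qed.

Definition substL : {lrmorphism freeAlg k -> freeAlg k} := subst.
Lemma substL_x i : substL (xvar k i) = g i.
Proof. exact: subst_x. Qed.
End Subst.

Section Cong.
Variables (R : nzRingType) (J : R -> Prop).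
Hypothesis Iid : is_ideal J.
Hypothesis Ic3 : forall a b c, J (comm3 a b c).

Lemma I0 : J 0. Proof. by case: Iid. Qed.
Lemma ID a b : J a -> J b -> J (a + b). Proof. by case: Iid => _ h *; apply: h. Qed.
Lemma IN a : J a -> J (- a). Proof. by case: Iid => _ _ h *; apply: h. Qed.
Lemma IMl a b : J b -> J (a * b). Proof. by case: Iid => _ _ _ h *; apply: h. Qed.
Lemma IMr a b : J a -> J (a * b). Proof. by case: Iid => _ _ _ _ h *; apply: h. Qed.
Lemma IB a b : J a -> J b -> J (a - b). Proof. by move=> ha hb; apply: ID ha (IN hb). Qed.
Lemma IMn a n : J a -> J (a *+ n).
Proof. move=> ha; elim: n => [|n IH]; first by rewrite mulr0n; apply: I0. by rewrite mulrS; apply: ID. Qed.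

Definition eqm (a b : R) := J (a - b).

Global Instance eqm_equiv : Equivalence eqm.
Proof.
split.
- by move=> a; rewrite /eqm subrr; apply: I0.
- by move=> a b h; rewrite /eqm -opprB; apply: IN.
- move=> a b c h1 h2; rewrite /eqm.
  have -> : a - c = (a - b) + (b - c) by rewrite addrA subrK.
  by apply: ID.
Qed.

Global Instance add_proper : Proper (eqm ==> eqm ==> eqm) (@GRing.add R).
Proof.
move=> a a' ha b b' hb; rewrite /eqm.
have -> : a + b - (a' + b') = (a - a') + (b - b') by rewrite opprD addrACA.
by apply: ID.
Qed.

Global Instance opp_proper : Proper (eqm ==> eqm) (@GRing.opp R).
Proof. by move=> a a' ha; rewrite /eqm -opprD; apply: IN. Qed.

Global Instance mul_proper : Proper (eqm ==> eqm ==> eqm) (@GRing.mul R).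
Proof.
move=> a a' ha b b' hb; rewrite /eqm.
have -> : a * b - a' * b' = (a - a') * b + a' * (b - b').
  by rewrite mulrBl mulrBr addrA subrK.
by apply: ID; [apply: IMr|apply: IMl].
Qed.

Global Instance natmul_proper n : Proper (eqm ==> eqm) (fun x : R => x *+ n).
Proof. by move=> a a' ha; rewrite /eqm -mulrnBl; apply: IMn. Qed.

Lemma eqmI a b : J (a - b) -> eqm a b. Proof. by []. Qed.
Lemma eqm0 a : J a -> eqm a 0. Proof. by rewrite /eqm subr0. Qed.

Lemma commN (a b : R) : comm a b = - comm b a.
Proof. by rewrite /comm opprB. Qed.

Lemma cent (a b x : R) : eqm (comm a b * x) (x * comm a b).
Proof. exact: Ic3. Qed.

Lemma commM_aux (C x t : R) : C * comm x t = comm (C * x) t - comm C t * x.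
Proof. by rewrite /comm !mulrBr !mulrBl !mulrA opprB addrA subrK. Qed.

Lemma mulC0 (x y t : R) : J (comm x y * comm x t).
Proof.
have e : comm x (y * x) = comm x y * x by rewrite /comm mulrBl !mulrA.
have h1 := Ic3 x (y * x) t; rewrite /comm3 e in h1.
rewrite commM_aux; apply: IB => //; apply: IMr; apply: Ic3.
Qed.

Lemma centX (a b x y : R) : J (comm a b * y) -> eqm (comm a b * x * y) 0.
Proof.
move=> h; rewrite (cent a b x) -mulrA; apply: eqm0; exact: IMl.
Qed.

Lemma movepow (a b x y : R) n : J (comm a b * comm y x) ->
  eqm (comm a b * (y * x ^+ n)) (comm a b * (x ^+ n * y)).
Proof.
move=> h; elim: n => [|n IH]; first by rewrite !expr0 mulr1 mul1r; reflexivity.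
have e : y * x = x * y + comm y x by rewrite /comm addrC subrK.
rewrite exprSr.
have -> : comm a b * (y * (x ^+ n * x)) = (comm a b * (y * x ^+ n)) * x by rewrite !mulrA.
rewrite IH.
have -> : comm a b * (x ^+ n * y) * x = comm a b * x ^+ n * (y * x) by rewrite !mulrA.
rewrite e mulrDr (centX (x ^+ n) h) addr0 !mulrA.
reflexivity.
Qed.

Lemma vwpow (a b v w : R) n : J (comm a b * comm v w) ->
  eqm (comm a b * (v * w) ^+ n) (comm a b * (v ^+ n * w ^+ n)).
Proof.
move=> h; elim: n => [|n IH]; first by rewrite !expr0 !mulr1; reflexivity.
rewrite exprSr mulrA IH.
have -> : comm a b * (v ^+ n * w ^+ n) * (v * w) = (comm a b * v ^+ n) * (w ^+ n * v) * w.
  by rewrite !mulrA.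
rewrite (cent a b (v ^+ n)) -(mulrA (v ^+ n)) -(movepow n h) !mulrA -(cent a b (v ^+ n)).
rewrite -!mulrA -exprSr (mulrA (v ^+ n)) -exprSr.
reflexivity.
Qed.

Lemma powcomm (x y : R) n :
  eqm (x ^+ n.+1 * y) (y * x ^+ n.+1 + (x ^+ n * comm x y) *+ n.+1).
Proof.
elim: n => [|n IH].
  by rewrite !expr1 expr0 mul1r mulr1n /comm addrC subrK; reflexivity.
have e : x * y = y * x + comm x y by rewrite /comm addrC subrK.
rewrite [x ^+ n.+2]exprSr -mulrA e mulrDr mulrA IH mulrDl -mulrnAl.
rewrite -(mulrA (x ^+ n *+ n.+1)) (cent x y x) mulrA mulrnAl -exprSr -mulrnAl -addrA (mulrSr (x ^+ n.+1) n.+1) mulrDl mulrA; reflexivity.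
Qed.

Variable p : nat.
Hypothesis Hp : forall z : R, z *+ p = 0.
Hypothesis p_gt0 : (0 < p)%N.

Lemma powcent (x y : R) : eqm (x ^+ p * y) (y * x ^+ p).
Proof.
case: p Hp p_gt0 => // n Hn _.
by rewrite powcomm Hn addr0; reflexivity.
Qed.

Lemma main (u v w : R) :
  eqm (kappa p u (v * w)) (v ^+ p * kappa p u w + w ^+ p * kappa p u v).
Proof.
have h1 : J (comm u v * comm w u) by rewrite (commN w u) mulrN; apply: IN; apply: mulC0.
have h2 : J (comm u v * comm v w) by rewrite (commN u v) mulNr; apply: IN; apply: mulC0.
have h3 : J (comm u v * comm w v) by rewrite (commN u v) (commN w v) mulrNN; apply: mulC0.
have h4 : J (comm u w * comm v u) by rewrite (commN v u) mulrN; apply: IN; apply: mulC0.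
have h5 : J (comm u w * comm v w) by rewrite (commN u w) (commN v w) mulrNN; apply: mulC0.
have hc : comm u (v * w) = comm u v * w + v * comm u w.
  by rewrite /comm mulrBr mulrBl !mulrA addrA subrK.
have pc := powcent.
case: p Hp p_gt0 pc => // n _ _ pc /=.
rewrite /kappa /= hc mulrDl mulrDl addrC.
set U := u ^+ n; set VW := (v * w) ^+ n; set A := comm u v; set B := comm u w.
have t2 : eqm (v * B * U * VW) (v ^+ n.+1 * (B * U * w ^+ n)).
  transitivity (B * (v * U) * VW); first by rewrite mulrA -(cent u w v); reflexivity.
  rewrite (movepow n h4).
  transitivity ((U * v) * (B * VW)).
    by rewrite (cent u w (U * v)) -(mulrA (U * v)); reflexivity.
  rewrite /VW (vwpow n h5).
  transitivity (B * (U * v) * (v ^+ n * w ^+ n)).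
    by rewrite mulrA -(cent u w (U * v)); reflexivity.
  have -> : B * (U * v) * (v ^+ n * w ^+ n) = B * (U * v ^+ n.+1) * w ^+ n.
    by rewrite exprS !mulrA.
  rewrite -(pc v U) mulrA (cent u w (v ^+ n.+1)) !mulrA; reflexivity.
have t1 : eqm (A * w * U * VW) (w ^+ n.+1 * (A * U * v ^+ n)).
  rewrite -(mulrA A) (movepow n h1).
  transitivity ((U * w) * (A * VW)).
    by rewrite (cent u v (U * w)) -(mulrA (U * w)); reflexivity.
  rewrite /VW (vwpow n h2).
  transitivity (U * (A * (w * v ^+ n)) * w ^+ n).
    by rewrite mulrA -(mulrA U w) -(cent u v w) !mulrA; reflexivity.
  rewrite (movepow n h3).
  have -> : U * (A * (v ^+ n * w)) * w ^+ n = U * A * v ^+ n * w ^+ n.+1.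
    by rewrite exprS !mulrA.
  rewrite -(cent u v U) (pc w (A * U * v ^+ n)); reflexivity.
rewrite t1 t2; reflexivity.
Qed.





End Cong.

Section Fin.
Variable k : fieldType.

Lemma T3_ideal : is_ideal (@T3 k).
Proof.
split.
- by move=> S [[h0 _ _ _ _] _] _.
- by move=> a b ha hb S hS hx; case: (hS) => [[_ hD _ _ _] _]; apply: hD; [apply: ha|apply: hb].
- by move=> a ha S hS hx; case: (hS) => [[_ _ hN _ _] _]; apply: hN; apply: ha.
- by move=> a b hb S hS hx; case: (hS) => [[_ _ _ hM _] _]; apply: hM; apply: hb.
- by move=> a b ha S hS hx; case: (hS) => [[_ _ _ _ hM] _]; apply: hM; apply: ha.
Qed.

Lemma lrmorph_comm3 (f : {lrmorphism freeAlg k -> freeAlg k}) x y z a b c :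
  f x = a -> f y = b -> f z = c -> f (comm3 x y z) = comm3 a b c.
Proof. by move=> <- <- <-; rewrite /comm3 /comm !(rmorphB, rmorphM). Qed.

Lemma T3_c3 (a b c : freeAlg k) : T3 (comm3 a b c).
Proof.
move=> S [hI hT] hx.
pose g (i : nat) : freeAlg k := if i == 1%N then a else if i == 2%N then b else c.
have h1 : substL g (xvar k 1) = a by exact: subst_x.
have h2 : substL g (xvar k 2) = b by exact: subst_x.
have h3 : substL g (xvar k 3) = c by exact: subst_x.
rewrite -(lrmorph_comm3 h1 h2 h3); exact: (hT (substL g) _ hx).
Qed.
End Fin.

Lemma kappa_central (R : nzRingType) (p : nat) (c u v : R) :
  (0 < p)%N -> (forall x, GRing.comm c x) -> kappa p u (c * v) = c ^+ p * kappa p u v.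
Proof.
case: p => // n _ hc /=.
rewrite /kappa /= exprMn_comm; last exact: hc.
have e : comm u (c * v) = c * comm u v.
  by rewrite /comm mulrBr mulrA -(hc u) !mulrA.
rewrite e exprS -!mulrA; congr (c * _); rewrite !mulrA; congr (_ * _).
rewrite -[RHS]mulrA; exact: commrX n (commr_sym (hc _)).
Qed.

Theorem lemma2p5 (k : fieldType) (p : nat) :
  prime p -> (p \in [pchar k]) -> (2 < p)%N ->
  (forall u v w : freeAlg k,
     T3 (kappa p u (v * w) - (v ^+ p * kappa p u w + w ^+ p * kappa p u v)))
  /\
  (forall (u v : freeAlg k) (alpha : k), in_k0 u -> in_k0 v ->
     kappa p u (alpha *: v) = alpha ^+ p *: kappa p u v).
Proof.
move=> pr hch p2; have p0 : (0 < p)%N by apply: prime_gt0.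
split.
- move=> u v w.
  have Hp : forall z : freeAlg k, z *+ p = 0.
    by move=> z; rewrite -mulr_natr -mpolyC_nat (pcharf0 hch) malgC0E mulr0.
  exact: (main (@T3_ideal k) (@T3_c3 k) Hp p0).
- move=> u v alpha _ _.
  rewrite -(mul_malgC alpha v) -(mul_malgC (alpha ^+ p) (kappa p u v)).
  rewrite (@kappa_central _ p alpha%:MP u v p0 (fun x => malgC_comm alpha x)).
  by rewrite rmorphXn.
Qed.
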